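(* Let $X=X_\Sigma$ be the projective toric manifold described in the context. If $\mathrm{ch}_2(X)$ is nef, then $p_3=1$.
   Context: Let $N=\mathbb{Z}^d$ and let $\Sigma$ be a smooth projective complete fan in $N_\mathbb{R}$ whose set of primitive ray generators is $\{v_1,\dots,v_{p_0},y_1,\dots,y_{p_1},z_1,\dots,z_{p_2},t_1,\dots,t_{p_3},u_1,\dots,u_{p_4}\}$, where $p_0,\dots,p_4$ are positive integers with $p_0+p_1+p_2+p_3+p_4-3=d$. A primitive collection is a set of ray generators not generating a cone of $\Sigma$ while every proper subset does. The primitive collections of $\Sigma$ are exactly $\{v_i\}\cup\{y_j\}$, $\{y_j\}\cup\{z_j\}$, $\{z_j\}\cup\{t_j\}$, $\{t_j\}\cup\{u_j\}$, $\{u_j\}\cup\{v_j\}$ (all elements of the indicated groups), with primitive relations $v_1+\cdots+v_{p_0}+y_1+\cdots+y_{p_1}=c_2z_2+\cdots+c_{p_2}z_{p_2}+(b_1+1)t_1+\cdots+(b_{p_3}+1)t_{p_3}$, $y_1+\cdots+y_{p_1}+z_1+\cdots+z_{p_2}=u_1+\cdots+u_{p_4}$, $z_1+\cdots+z_{p_2}+t_1+\cdots+t_{p_3}=0$, $t_1+\cdots+t_{p_3}+u_1+\cdots+u_{p_4}=y_1+\cdots+y_{p_1}$, $u_1+\cdots+u_{p_4}+v_1+\cdots+v_{p_0}=c_2z_2+\cdots+c_{p_2}z_{p_2}+b_1t_1+\cdots+b_{p_3}t_{p_3}$, with $b_i,c_j\in\mathbb{Z}_{\ge0}$, and $c_2=\min_j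 c_j$, $b_1=\min_i b_i$. $X=X_\Sigma$. With $D_1,\dots,D_n$ the torus invariant prime divisors, $\mathrm{ch}_2(X)=\frac12\sum D_i^2$, and $\mathrm{ch}_2(X)$ is nef if $(\mathrm{ch}_2(X)\cdot S)\ge0$ for every 2-dimensional torus invariant irreducible closed subvariety $S\subset X$. *)

(* Defs.v *)
From HB Require Import structures.
From mathcomp Require Import all_boot all_order all_algebra.
Set Implicit Arguments. Unset Strict Implicit. Unset Printing Implicit Defensive.
Import Order.TTheory GRing.Theory Num.Theory.

(* Index type of the ray generators: group k (k = 0..4 for v,y,z,t,u) *)
(* has p_k members, indexed 0..p_k-1.                                   *)
Definition psz (p0 p1 p2 p3 p4 : nat) (k : 'I_5) : nat :=
  nth 0%N [:: p0; p1; p2; p3; p4] k.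

Definition ray (p0 p1 p2 p3 p4 : nat) : finType :=
  {k : 'I_5 & 'I_(psz p0 p1 p2 p3 p4 k)}.

Definition grp p0 p1 p2 p3 p4 (k : 'I_5) : {set ray p0 p1 p2 p3 p4} :=
  [set r | tag r == k].
Definition idx p0 p1 p2 p3 p4 (r : ray p0 p1 p2 p3 p4) : nat := nat_of_ord (tagged r).

Definition dimN (p0 p1 p2 p3 p4 : nat) : nat := (p0 + p1 + p2 + p3 + p4 - 3)%N.

(* Generic notions for a simplicial fan given by a finite set R of     *)
(* rays with generators vec : R -> Z^d and its set of cones (each cone *)
(* is represented by the set of its ray generators).                   *)
Local Open Scope ring_scope.

Definition vecQ (R : finType) (d : nat) (vec : R -> 'rV[int]_d) (i : R) : 'rV[rat]_d :=
  map_mx (intr : int -> rat) (vec i).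

Definition in_cone (R : finType) (d : nat) (vec : R -> 'rV[int]_d) (S : {set R})
  (x : 'rV[rat]_d) : Prop :=
  exists a : R -> rat, (forall i, 0 <= a i) /\ x = \sum_(i in S) a i *: vecQ vec i.

Definition is_fan (R : finType) (d : nat) (vec : R -> 'rV[int]_d) (cones : {set {set R}}) : Prop :=
  [/\
      forall i, [set i] \in cones,
      forall S T : {set R}, S \in cones -> T \subset S -> T \in cones,
      forall S : {set R}, S \in cones -> forall a : R -> rat,
        \sum_(i in S) a i *: vecQ vec i = 0 -> forall i, i \in S -> a i = 0
    &
      forall (S T : {set R}) x, S \in cones -> T \in cones ->
        in_cone vec S x -> in_cone vec T x -> in_cone vec (S :&: T) x].

(* smooth: the generators of each cone are part of a Z-basis of N *)
Definition is_smooth (R : finType) (d : nat) (vec : R -> 'rV[int]_d) (cones : {set {set R}}) : Prop :=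
  forall S : {set R}, S \in cones -> forall x : 'rV[int]_d,
    (exists a : R -> rat, map_mx (intr : int -> rat) x = \sum_(i in S) a i *: vecQ vec i) ->
    exists a : R -> int, x = \sum_(i in S) a i *: vec i.

(* complete: the support of the fan is all of N_R (equivalently, as the cones are
   rational polyhedral, all of Q^d) *)
Definition is_complete (R : finType) (d : nat) (vec : R -> 'rV[int]_d) (cones : {set {set R}}) : Prop :=
  forall x : 'rV[rat]_d, exists2 S, S \in cones & in_cone vec S x.

(* projective: there is a strictly convex piecewise-linear support function,
   i.e. values phi on the rays such that for every maximal cone S the linear
   function m_S agreeing with phi on S is strictly below phi off S. *)
Definition is_projective (R : finType) (d : nat) (vec : R -> 'rV[int]_d) (cones : {set {set R}}) : Prop :=
  exists phi : R -> rat, forall S : {set R}, S \in cones -> #|S| = d ->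
    exists m : 'cV[rat]_d,
      (forall i, i \in S -> (vecQ vec i *m m) 0 0 = phi i) /\
      (forall j, j \notin S -> (vecQ vec j *m m) 0 0 < phi j).

Definition smooth_projective_complete_fan (R : finType) (d : nat) (vec : R -> 'rV[int]_d)
  (cones : {set {set R}}) : Prop :=
  [/\ is_fan vec cones, is_smooth vec cones, is_complete vec cones & is_projective vec cones].

Definition primitive_collection (R : finType) (cones : {set {set R}}) (P : {set R}) : Prop :=
  P \notin cones /\ forall Q : {set R}, Q \proper P -> Q \in cones.

(* Intersection theory on X_Sigma: monomials in the classes x_i = [D_i] *)
(* are exponent vectors mu : R -> nat; deg mu is the degree of the      *)
(* product of the D_i^(mu i) when sum mu = d. It is characterized (for  *)
(* a smooth complete fan) by the Stanley-Reisner presentation of the    *)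
(* Chow ring A(X)_Q = Q[x_i]/(I_SR + J) and deg(point) = 1.             *)
Definition mdeg (R : finType) (mu : {ffun R -> nat}) : nat := (\sum_i mu i)%N.

Definition bump (R : finType) (mu : {ffun R -> nat}) (i : R) : {ffun R -> nat} :=
  [ffun j => (mu j + (j == i))%N].

Definition intersection_form (R : finType) (d : nat) (vec : R -> 'rV[int]_d)
  (cones : {set {set R}}) (deg : {ffun R -> nat} -> rat) : Prop :=
  [/\
      forall mu, mdeg mu = d -> [set i | (0 < mu i)%N] \notin cones -> deg mu = 0,
      (* a maximal cone gives a point, of degree 1 (smoothness) *)
      forall S : {set R}, S \in cones -> #|S| = d -> deg [ffun i => nat_of_bool (i \in S)] = 1
    &
      forall mu, mdeg mu = d.-1 -> forall k : 'I_d,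
        \sum_i (vec i 0 k)%:~R * deg (bump mu i) = 0].

(* (ch_2(X) . V(tau)) = 1/2 sum_i (D_i^2 . V(tau)), with [V(tau)] = prod_{i in tau} x_i *)
Definition ch2_dot (R : finType) (deg : {ffun R -> nat} -> rat) (tau : {set R}) : rat :=
  2^-1 * \sum_i deg [ffun j => (nat_of_bool (j \in tau) + (nat_of_bool (j == i)).*2)%N].

(* ch_2(X) nef: nonnegative on every torus-invariant surface V(tau), dim tau = d-2 *)
Definition ch2_nef (R : finType) (d : nat) (cones : {set {set R}})
  (deg : {ffun R -> nat} -> rat) : Prop :=
  forall tau : {set R}, tau \in cones -> #|tau| = (d - 2)%N -> 0 <= ch2_dot deg tau.

Definition gsum p0 p1 p2 p3 p4 d (vec : ray p0 p1 p2 p3 p4 -> 'rV[int]_d) (k : 'I_5)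
  : 'rV[int]_d := \sum_(r in grp p0 p1 p2 p3 p4 k) vec r.

(* c_2 z_2 + ... + c_{p2} z_{p2}; with 0-based indices, z_j (j>=1) has coefficient c j *)
Definition zterm p0 p1 p2 p3 p4 d (c : nat -> nat) (vec : ray p0 p1 p2 p3 p4 -> 'rV[int]_d)
  : 'rV[int]_d :=
  \sum_(r in grp p0 p1 p2 p3 p4 2) vec r *+ (if idx r == 0%N then 0%N else c (idx r)).

(* sum_i (b_i + s) t_i, with 0-based indices: t_i has coefficient b i + s *)
Definition tterm p0 p1 p2 p3 p4 d (b : nat -> nat) (s : nat)
  (vec : ray p0 p1 p2 p3 p4 -> 'rV[int]_d) : 'rV[int]_d :=
  \sum_(r in grp p0 p1 p2 p3 p4 3) vec r *+ (b (idx r) + s)%N.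

Definition primitive_relations p0 p1 p2 p3 p4 d (b c : nat -> nat)
  (vec : ray p0 p1 p2 p3 p4 -> 'rV[int]_d) : Prop :=
  let G := gsum vec in
  [/\ G 0 + G 1 = zterm c vec + tterm b 1 vec,
      G 1 + G 2 = G 4,
      G 2 + G 3 = 0,
      G 3 + G 4 = G 1
    & G 4 + G 0 = zterm c vec + tterm b 0 vec].

Definition the_primitive_collections p0 p1 p2 p3 p4 : seq {set ray p0 p1 p2 p3 p4} :=
  let G := grp p0 p1 p2 p3 p4 in
  [:: G 0 :|: G 1; G 1 :|: G 2; G 2 :|: G 3; G 3 :|: G 4; G 4 :|: G 0].

(* Main.v *)
Require Import Defs.
From HB Require Import structures.
From mathcomp Require Import all_boot all_order all_algebra.
From mathcomp Require Import zify ring lra.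
Import Order.TTheory GRing.Theory Num.Theory.
Set Implicit Arguments. Unset Strict Implicit. Unset Printing Implicit Defensive.

Section S.
Variables p0 p1 p2 p3 p4 : nat.
Hypotheses (hp0 : (0 < p0)%N) (hp1 : (0 < p1)%N) (hp2 : (0 < p2)%N) (hp3 : (0 < p3)%N) (hp4 : (0 < p4)%N).
Variables b c : nat -> nat.
Local Notation R := (ray p0 p1 p2 p3 p4).
Local Notation d := (dimN p0 p1 p2 p3 p4).
Variable vec : R -> 'rV[int]_d.
Variable cones : {set {set R}}.
Hypothesis Hfan : smooth_projective_complete_fan vec cones.
Hypothesis Hprim : forall P, primitive_collection cones P <-> P \in the_primitive_collections p0 p1 p2 p3 p4.
Hypothesis Hrel : primitive_relations b c vec.
Variable deg : {ffun R -> nat} -> rat.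
Hypothesis Hdeg : intersection_form vec cones deg.

Local Open Scope ring_scope.

Definition tg (r : R) : nat := nat_of_ord (tag r).
Local Notation G := (grp p0 p1 p2 p3 p4).

Lemma grpE (r : R) (k : 'I_5) : (r \in G k) = (tg r == k).
Proof. by rewrite inE. Qed.

Lemma cardR : #|{: R}| = (p0 + p1 + p2 + p3 + p4)%N.
Proof.
rewrite card_tagged sumnE big_map big_enum /=.
by rewrite !big_ord_recl big_ord0 /psz /= !card_ord !addnA addn0.
Qed.

Lemma prim_noncone (P : {set R}) : P \in the_primitive_collections p0 p1 p2 p3 p4 -> P \notin cones.
Proof. by move/Hprim => []. Qed.

Lemma face (S T : {set R}) : S \in cones -> T \subset S -> T \in cones.
Proof. by case: Hfan => -[_ H _ _] _ _ _; apply: H. Qed.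

Lemma noncone (S P : {set R}) : P \in the_primitive_collections p0 p1 p2 p3 p4 -> P \subset S -> S \notin cones.
Proof.
move=> HP PS; apply/negP => SC; have := prim_noncone HP.
by rewrite (face SC PS).
Qed.

Lemma cone_noprim (S : {set R}) :
  (forall P, P \in the_primitive_collections p0 p1 p2 p3 p4 -> ~~ (P \subset S)) -> S \in cones.
Proof.
move: {2}#|S| (leqnn #|S|) => n; elim: n S => [|n IH] S Sn H.
  case SC: (S \in cones) => //.
  have: primitive_collection cones S.
    split; first by rewrite SC.
    move=> Q QS; have := proper_card QS; by rewrite ltnNge (leq_trans Sn (leq0n _)).
  by move/Hprim/H; rewrite subxx.
case SC: (S \in cones) => //.
have: primitive_collection cones S.
  split; first by rewrite SC.
  move=> Q QS; have QSc := proper_card QS.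
  apply: IH; first by rewrite -ltnS; apply: leq_trans Sn.
  move=> P HP; apply/negP => PQ; move: (H P HP).
  by rewrite (subset_trans PQ (proper_sub QS)).
by move/Hprim/H; rewrite subxx.
Qed.

Definition ind (S : {set R}) : {ffun R -> nat} := [ffun r => nat_of_bool (r \in S)].
Definition W (tau : {set R}) (i j : R) : rat := deg (Defs.bump (Defs.bump (ind tau) i) j).

Lemma mdeg_ind (S : {set R}) : mdeg (ind S) = #|S|.
Proof.
rewrite /mdeg -sum1_card [RHS]big_mkcond /=; apply: eq_bigr => r _.
by rewrite ffunE; case: (r \in S).
Qed.

Lemma mdeg_bump (mu : {ffun R -> nat}) i : mdeg (Defs.bump mu i) = (mdeg mu).+1.
Proof.
rewrite /mdeg /Defs.bump; under eq_bigr do rewrite ffunE.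
rewrite big_split /=.
suff -> : (\sum_r nat_of_bool (r == i) = 1)%N by rewrite addn1.
by rewrite (bigD1 i) //= eqxx big1 // => r /negbTE ->.
Qed.

Lemma W_sym (tau : {set R}) (i : R) (j : R) : W tau i j = W tau j i.
Proof. by rewrite /W; congr deg; apply/ffunP => r; rewrite !ffunE addnAC. Qed.

Lemma mdeg_bb (tau : {set R}) (i : R) (j : R) : mdeg (Defs.bump (Defs.bump (ind tau) i) j) = (#|tau| + 2)%N.
Proof. by rewrite !mdeg_bump mdeg_ind addn2. Qed.

Lemma supp_bb (tau : {set R}) (i : R) (j : R) : [set r | (0 < Defs.bump (Defs.bump (ind tau) i) j r)%N] = tau :|: [set i; j].
Proof.
apply/setP => r; rewrite !inE !ffunE.
by case: (r \in tau); case: (r == i); case: (r == j).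
Qed.

Lemma W_SR (tau : {set R}) (i : R) (j : R) : (#|tau| + 2 = d)%N -> tau :|: [set i; j] \notin cones -> W tau i j = 0.
Proof.
move=> Hc Hn; case: Hdeg => H1 _ _; apply: H1; first by rewrite mdeg_bb.
by rewrite supp_bb.
Qed.

Lemma card_add2 (tau : {set R}) i j : i != j -> i \notin tau -> j \notin tau ->
  #|tau :|: [set i; j]| = (#|tau| + 2)%N.
Proof.
move=> ij ni nj; rewrite cardsU cards2 ij.
suff -> : tau :&: [set i; j] = set0 by rewrite cards0 subn0 addn2.
apply/setP => r; rewrite !inE.
case: (r =P i) => [->|_]; first by rewrite (negbTE ni).
case: (r =P j) => [->|_]; first by rewrite (negbTE nj).
by rewrite andbF.
Qed.

Lemma W_one (tau : {set R}) (i : R) (j : R) : (#|tau| + 2 = d)%N -> i != j -> i \notin tau -> j \notin tau ->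
  tau :|: [set i; j] \in cones -> W tau i j = 1.
Proof.
move=> Hc ij ni nj HS; case: Hdeg => _ H2 _; rewrite /W.
have -> : Defs.bump (Defs.bump (ind tau) i) j = [ffun r => nat_of_bool (r \in tau :|: [set i; j])].
  apply/ffunP => r; rewrite !ffunE !inE.
  case: (r =P i) => [->|_]; first by rewrite (negbTE ni) (negbTE ij).
  case: (r =P j) => [->|_]; first by rewrite (negbTE nj).
  by rewrite orbF; case: (r \in tau).
by apply: H2 => //; rewrite card_add2.
Qed.

Lemma W_lin (tau : {set R}) (i : R) : (#|tau| + 2 = d)%N -> \sum_r W tau i r *: vecQ vec r = 0.
Proof.
move=> Hc; case: Hdeg => _ _ H3.
have Hm : mdeg (Defs.bump (ind tau) i) = d.-1 by rewrite mdeg_bump mdeg_ind -Hc addn2.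
apply/rowP => k; rewrite summxE mxE.
apply: etrans (H3 _ Hm k); apply: eq_bigr => r _.
by rewrite !mxE mulrC.
Qed.

Lemma o0E : nat_of_ord (0 : 'I_5) = 0%N. Proof. by []. Qed.
Lemma o1E : nat_of_ord (1 : 'I_5) = 1%N. Proof. by []. Qed.
Lemma o2E : nat_of_ord (2 : 'I_5) = 2%N. Proof. by []. Qed.
Lemma o3E : nat_of_ord (3 : 'I_5) = 3%N. Proof. by []. Qed.
Lemma o4E : nat_of_ord (4 : 'I_5) = 4%N. Proof. by []. Qed.

Lemma tg_lt5 (r : R) : (tg r < 5)%N. Proof. exact: ltn_ord. Qed.

Definition zc (j : nat) : nat := if j == 0%N then 0%N else c j.
Definition rho1 (r : R) : rat :=
  match tg r with 0 | 1 => 1 | 2 => - (zc (idx r))%:R | 3 => - (b (idx r) + 1)%:R | _ => 0 end.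
Definition rho2 (r : R) : rat :=
  match tg r with 0 => 0 | 1 | 2 => 1 | 3 => 0 | _ => -1 end.
Definition rho3 (r : R) : rat :=
  match tg r with 2 | 3 => 1 | _ => 0 end.

Lemma map_intrMn (A : 'rV[int]_d) n : map_mx (intr : int -> rat) (A *+ n) = map_mx (intr : int -> rat) A *+ n.
Proof. by rewrite raddfMn. Qed.

Lemma mapQ_sum (A : {set R}) (n : R -> nat) :
  map_mx (intr : int -> rat) (\sum_(r in A) vec r *+ n r) =
  \sum_r (if r \in A then (n r)%:R else 0) *: vecQ vec r.
Proof.
rewrite map_mx_sum big_mkcond; apply: eq_bigr => r _.
by case: (r \in A); rewrite ?scale0r ?map_intrMn ?scaler_nat.
Qed.

Lemma mapQ_gsum (k : 'I_5) :
  map_mx (intr : int -> rat) (gsum vec k) = \sum_r (if r \in G k then 1 else 0) *: vecQ vec r.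
Proof.
rewrite /gsum (eq_bigr (fun r => vec r *+ 1)) ?mapQ_sum //.
Qed.

Lemma rel1 : \sum_r rho1 r *: vecQ vec r = 0.
Proof.
case: Hrel => H1 _ _ _ _.
have : map_mx (intr : int -> rat) (gsum vec 0 + gsum vec 1 - (zterm c vec + tterm b 1 vec)) = 0.
  by rewrite H1 subrr; apply/matrixP => i j; rewrite !mxE.
rewrite map_mxB !map_mxD /zterm /tterm !mapQ_sum !mapQ_gsum -!big_split -sumrB /= => HH; rewrite -[RHS]HH.
apply: eq_bigr => r _; rewrite -!scalerDl -scalerBl; congr (_ *: _).
rewrite /rho1 !grpE o0E o1E o2E o3E /zc.
case: (tg r) (tg_lt5 r) => [|[|[|[|[|k]]]]] //= _; by rewrite ?(addr0, add0r, subr0, sub0r).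
Qed.

Lemma rel2 : \sum_r rho2 r *: vecQ vec r = 0.
Proof.
case: Hrel => _ H2 _ _ _.
have : map_mx (intr : int -> rat) (gsum vec 1 + gsum vec 2 - gsum vec 4) = 0.
  by rewrite H2 subrr; apply/matrixP => i j; rewrite !mxE.
rewrite map_mxB !map_mxD !mapQ_gsum -!big_split -sumrB /= => HH; rewrite -[RHS]HH.
apply: eq_bigr => r _; rewrite -!scalerDl -scalerBl; congr (_ *: _).
rewrite /rho2 !grpE o1E o2E o4E.
case: (tg r) (tg_lt5 r) => [|[|[|[|[|k]]]]] //= _; by rewrite ?(addr0, add0r, subr0, sub0r).
Qed.

Lemma rel3 : \sum_r rho3 r *: vecQ vec r = 0.
Proof.
case: Hrel => _ _ H3 _ _.
have : map_mx (intr : int -> rat) (gsum vec 2 + gsum vec 3) = 0.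
  by rewrite H3; apply/matrixP => i j; rewrite !mxE.
rewrite !map_mxD !mapQ_gsum -!big_split /= => HH; rewrite -[RHS]HH.
apply: eq_bigr => r _; rewrite -!scalerDl; congr (_ *: _).
rewrite /rho3 !grpE o2E o3E.
by case: (tg r) (tg_lt5 r) => [|[|[|[|[|k]]]]] //= _; rewrite ?addr0 ?add0r.
Qed.

Lemma indep (S : {set R}) (a : R -> rat) : S \in cones ->
  \sum_r a r *: vecQ vec r = 0 -> (forall r, r \notin S -> a r = 0) ->
  forall r, r \in S -> a r = 0.
Proof.
move=> SC Ha Hout; case: Hfan => -[_ _ H3 _] _ _ _; apply: H3 => //.
rewrite -[RHS]Ha [RHS](bigID (fun r => r \in S)) /= [X in _ = _ + X]big1 ?addr0 //.
by move=> r /Hout ->; rewrite scale0r.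
Qed.

Lemma solve (S : {set R}) (a : R -> rat) l1 l2 l3 : S \in cones ->
  \sum_r a r *: vecQ vec r = 0 ->
  (forall r, r \notin S -> a r = l1 * rho1 r + l2 * rho2 r + l3 * rho3 r) ->
  forall r, r \in S -> a r = l1 * rho1 r + l2 * rho2 r + l3 * rho3 r.
Proof.
move=> SC Ha Hout r rS; apply/eqP; rewrite -subr_eq0; apply/eqP.
apply: (indep (a := fun r => a r - (l1 * rho1 r + l2 * rho2 r + l3 * rho3 r))) SC _ _ r rS.
  rewrite (eq_bigr (fun r => a r *: vecQ vec r - (l1 *: (rho1 r *: vecQ vec r)
     + l2 *: (rho2 r *: vecQ vec r) + l3 *: (rho3 r *: vecQ vec r)))); last first.
    by move=> r' _; rewrite scalerBl !scalerDl !scalerA.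
  by rewrite sumrB !big_split /= -!scaler_sumr Ha rel1 rel2 rel3 !scaler0 !addr0 subr0.
by move=> r' /Hout ->; rewrite subrr.
Qed.

Definition K0 : 'I_5 := @Ordinal 5 0 isT.
Definition K1 : 'I_5 := @Ordinal 5 1 isT.
Definition K2 : 'I_5 := @Ordinal 5 2 isT.
Definition K3 : 'I_5 := @Ordinal 5 3 isT.
Definition K4 : 'I_5 := @Ordinal 5 4 isT.

Definition mk (k : 'I_5) (j : nat) (h : (j < psz p0 p1 p2 p3 p4 k)%N) : R :=
  Tagged (fun k => 'I_(psz p0 p1 p2 p3 p4 k)) (Ordinal h).

Lemma mk_eq (r : R) (k : 'I_5) j h : tg r = k -> idx r = j -> r = @mk k j h.
Proof.
case: r => k' j' /= Hk Hj.
have ek : k' = k by apply: val_inj.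
subst k'; apply/eqP; rewrite eq_Tagged; apply/eqP/val_inj => /=; exact: Hj.
Qed.

Definition v0 : R := @mk K0 0 hp0.
Definition y0 : R := @mk K1 0 hp1.
Definition z0 : R := @mk K2 0 hp2.
Definition t0 : R := @mk K3 0 hp3.
Definition u0 : R := @mk K4 0 hp4.

Lemma ch2W (tau : {set R}) : ch2_dot deg tau = 2^-1 * \sum_i W tau i i.
Proof.
rewrite /ch2_dot; congr (_ * _); apply: eq_bigr => i _; rewrite /W; congr deg.
by apply/ffunP => r; rewrite !ffunE -addnn addnA.
Qed.

Lemma cone_wit (S : {set R}) x1 x2 x3 x4 x5 :
  (tg x1 == 0%N) || (tg x1 == 1%N) -> (tg x2 == 1%N) || (tg x2 == 2%N) ->
  (tg x3 == 2%N) || (tg x3 == 3%N) -> (tg x4 == 3%N) || (tg x4 == 4%N) ->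
  (tg x5 == 4%N) || (tg x5 == 0%N) ->
  x1 \notin S -> x2 \notin S -> x3 \notin S -> x4 \notin S -> x5 \notin S -> S \in cones.
Proof.
move=> h1 h2 h3 h4 h5 n1 n2 n3 n4 n5; apply: cone_noprim => P.
rewrite /the_primitive_collections !in_cons in_nil orbF
  => /orP[/eqP->|/orP[/eqP->|/orP[/eqP->|/orP[/eqP->|/eqP->]]]]; apply/negP => /subsetP H.
- by case/negP: n1; apply: H; rewrite in_setU !grpE o0E o1E.
- by case/negP: n2; apply: H; rewrite in_setU !grpE o1E o2E.
- by case/negP: n3; apply: H; rewrite in_setU !grpE o2E o3E.
- by case/negP: n4; apply: H; rewrite in_setU !grpE o3E o4E.
- by case/negP: n5; apply: H; rewrite in_setU !grpE o4E o0E.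
Qed.

Lemma noncone2 (S : {set R}) (k1 k2 : 'I_5) :
  G k1 :|: G k2 \in the_primitive_collections p0 p1 p2 p3 p4 ->
  (forall r, (tg r == k1) || (tg r == k2) -> r \in S) -> S \notin cones.
Proof.
move=> HP H; apply: (noncone HP); apply/subsetP => r.
by rewrite in_setU !grpE => /H.
Qed.

Definition tauP : {set R} := [set r | idx r != 0%N].

Lemma omitP (r : R) : idx r = 0%N -> r = v0 \/ r = y0 \/ r = z0 \/ r = t0 \/ r = u0.
Proof.
move=> h; have := tg_lt5 r; case E: (tg r) => [|[|[|[|[|k]]]]] // _.
- by left; apply: mk_eq.
- by right; left; apply: mk_eq.
- by right; right; left; apply: mk_eq.
- by right; right; right; left; apply: mk_eq.
- by right; right; right; right; apply: mk_eq.
Qed.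

Lemma card_tauP : (#|tauP| + 2 = d)%N.
Proof.
have -> : tauP = ~: [set v0; y0; z0; t0; u0].
  apply/setP => r; rewrite !inE.
  case: (idx r =P 0%N) => [/omitP|Hr]; first by case=> [->|[->|[->|[->|->]]]]; rewrite ?eqxx ?orbT.
  congr (~~ _); apply/esym/negP; rewrite -!orbA.
  move=> /orP[/eqP Er|/orP[/eqP Er|/orP[/eqP Er|/orP[/eqP Er|/eqP Er]]]];
  by apply: Hr; rewrite Er.
have := cardsC [set v0; y0; z0; t0; u0]; rewrite cardR.
have -> : #|[set v0; y0; z0; t0; u0]| = 5%N.
  have -> : [set v0; y0; z0; t0; u0] = v0 |: (y0 |: (z0 |: (t0 |: [set u0]))).
    by apply/setP => r; rewrite !inE !orbA.
  by rewrite !cardsU1 cards1 !inE.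
rewrite /dimN => <-.
lia.
Qed.

Lemma Pnon (a b' : R) (k1 k2 : 'I_5) :
  G k1 :|: G k2 \in the_primitive_collections p0 p1 p2 p3 p4 ->
  (forall r, idx r = 0%N -> (tg r == k1) || (tg r == k2) -> (r == a) || (r == b')) ->
  tauP :|: [set a; b'] \notin cones.
Proof.
move=> HP H; apply: (noncone2 HP) => r Hr; rewrite !inE.
case: (idx r =P 0%N) => [h|]; last by [].
by rewrite (H r h Hr) orbT.
Qed.

Ltac pnon k1 k2 := apply: (@Pnon _ _ k1 k2); [by rewrite !inE eqxx ?orbT |
  by move=> r /omitP [->|[->|[->|[->|->]]]]; rewrite ?eqxx ?orbT //;
     rewrite /tg /= ?o0E ?o1E ?o2E ?o3E ?o4E].

Lemma WPvy : W tauP v0 y0 = 0.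
Proof. by apply: W_SR; [exact: card_tauP | pnon (0 : 'I_5) (1 : 'I_5)]. Qed.
Lemma WPvu : W tauP v0 u0 = 0.
Proof. by apply: W_SR; [exact: card_tauP | pnon (4 : 'I_5) (0 : 'I_5)]. Qed.
Lemma WPyz : W tauP y0 z0 = 0.
Proof. by apply: W_SR; [exact: card_tauP | pnon (1 : 'I_5) (2 : 'I_5)]. Qed.
Lemma WPzt : W tauP z0 t0 = 0.
Proof. by apply: W_SR; [exact: card_tauP | pnon (2 : 'I_5) (3 : 'I_5)]. Qed.
Lemma WPtu : W tauP t0 u0 = 0.
Proof. by apply: W_SR; [exact: card_tauP | pnon (3 : 'I_5) (4 : 'I_5)]. Qed.

Ltac cw x1 x2 x3 x4 x5 := apply: (@cone_wit _ x1 x2 x3 x4 x5); by rewrite ?inE.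

Lemma CPvz : tauP :|: [set v0; z0] \in cones. Proof. cw y0 y0 t0 t0 u0. Qed.
Lemma CPyt : tauP :|: [set y0; t0] \in cones. Proof. cw v0 z0 z0 u0 v0. Qed.
Lemma CPvt : tauP :|: [set v0; t0] \in cones. Proof. cw y0 y0 z0 u0 u0. Qed.
Lemma CPyu : tauP :|: [set y0; u0] \in cones. Proof. cw v0 z0 z0 t0 v0. Qed.
Lemma CPzu : tauP :|: [set z0; u0] \in cones. Proof. cw v0 y0 t0 t0 v0. Qed.
Lemma CP : tauP \in cones. Proof. cw v0 y0 z0 t0 u0. Qed.

Lemma WPvt : W tauP v0 t0 = 1.
Proof. by apply: W_one; rewrite ?inE //; [exact: card_tauP | exact: CPvt]. Qed.
Lemma WPyu : W tauP y0 u0 = 1.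
Proof. by apply: W_one; rewrite ?inE //; [exact: card_tauP | exact: CPyu]. Qed.
Lemma WPzu : W tauP z0 u0 = 1.
Proof. by apply: W_one; rewrite ?inE //; [exact: card_tauP | exact: CPzu]. Qed.
Lemma WPty : W tauP t0 y0 = 1.
Proof. by rewrite W_sym; apply: W_one; rewrite ?inE //; [exact: card_tauP | exact: CPyt]. Qed.

Lemma WPyv : W tauP y0 v0 = W tauP v0 y0. Proof. exact: W_sym. Qed.
Lemma WPuv : W tauP u0 v0 = W tauP v0 u0. Proof. exact: W_sym. Qed.
Lemma WPzy : W tauP z0 y0 = W tauP y0 z0. Proof. exact: W_sym. Qed.
Lemma WPtz : W tauP t0 z0 = W tauP z0 t0. Proof. exact: W_sym. Qed.
Lemma WPut : W tauP u0 t0 = W tauP t0 u0. Proof. exact: W_sym. Qed.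
Lemma WPtv : W tauP t0 v0 = W tauP v0 t0. Proof. exact: W_sym. Qed.
Lemma WPuy : W tauP u0 y0 = W tauP y0 u0. Proof. exact: W_sym. Qed.
Lemma WPuz : W tauP u0 z0 = W tauP z0 u0. Proof. exact: W_sym. Qed.
Lemma WPyt : W tauP y0 t0 = W tauP t0 y0. Proof. exact: W_sym. Qed.
Definition WPall := (WPvy, WPvu, WPyz, WPzt, WPtu, WPvt, WPyu, WPzu, WPty, WPyv, WPuv, WPzy, WPtz, WPut, WPtv, WPuy, WPuz, WPyt).

Ltac outs := let r := fresh "r" in move=> r; rewrite !inE negb_or => /andP[] /negPn/eqP/omitP;
  case=> [->|[->|[->|[->|->]]]]; rewrite ?eqxx ?orbT // => _;
  rewrite ?WPall /rho1 /rho2 /rho3 /zc /=.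

Lemma SP1 r : r \in tauP :|: [set v0; z0] -> W tauP v0 r = rho3 r.
Proof.
move=> rS; rewrite (@solve _ (W tauP v0) 0 0 1 CPvz (W_lin v0 card_tauP) _ r rS); first by ring.
outs; ring.
Qed.

Lemma SP2 r : r \in tauP :|: [set y0; t0] -> W tauP y0 r = - rho2 r + rho3 r.
Proof.
move=> rS; rewrite (@solve _ (W tauP y0) 0 (-1) 1 CPyt (W_lin y0 card_tauP) _ r rS); first by ring.
outs; ring.
Qed.

Lemma SP3 r : r \in tauP :|: [set v0; z0] ->
  W tauP z0 r = rho1 r - rho2 r + (b 0 + 1)%:R * rho3 r.
Proof.
move=> rS; rewrite (@solve _ (W tauP z0) 1 (-1) (b 0 + 1)%:R CPvz (W_lin z0 card_tauP) _ r rS);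
  first by ring.
outs; ring.
Qed.

Lemma SP4 r : r \in tauP :|: [set v0; t0] -> W tauP t0 r = rho1 r.
Proof.
move=> rS; rewrite (@solve _ (W tauP t0) 1 0 0 CPvt (W_lin t0 card_tauP) _ r rS); first by ring.
outs; ring.
Qed.

Lemma SP5 r : r \in tauP :|: [set y0; u0] -> W tauP u0 r = rho2 r.
Proof.
move=> rS; rewrite (@solve _ (W tauP u0) 0 1 0 CPyu (W_lin u0 card_tauP) _ r rS); first by ring.
outs; ring.
Qed.

Lemma inU (tau : {set R}) a b' r : r \in tau -> r \in tau :|: [set a; b'].
Proof. by rewrite inE => ->. Qed.

Lemma SP6 i : i \in tauP ->
  W tauP i i = rho3 i * rho1 i + (- rho2 i) * rho2 i + (rho1 i + (b 0 + 1)%:R * rho3 i) * rho3 i.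
Proof.
move=> iP.
rewrite (@solve _ (W tauP i) (rho3 i) (- rho2 i) (rho1 i + (b 0 + 1)%:R * rho3 i) CPvz
   (W_lin i card_tauP) _ i (inU _ _ iP)) //.
move=> r; rewrite !inE negb_or => /andP[] /negPn/eqP/omitP;
  case=> [->|[->|[->|[->|->]]]]; rewrite ?eqxx ?orbT // => _.
- rewrite W_sym SP2 ?inU //; rewrite /rho1 /rho2 /rho3 /=; ring.
- rewrite W_sym SP4 ?inU //; rewrite /rho1 /rho2 /rho3 /=; ring.
- rewrite W_sym SP5 ?inU //; rewrite /rho1 /rho2 /rho3 /=; ring.
Qed.

Lemma inU1 (tau : {set R}) a b' : a \in tau :|: [set a; b'].
Proof. by rewrite !inE eqxx ?orbT. Qed.
Lemma inU2 (tau : {set R}) a b' : b' \in tau :|: [set a; b'].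
Proof. by rewrite !inE eqxx ?orbT. Qed.

Lemma sumO_P : W tauP v0 v0 + W tauP y0 y0 + W tauP z0 z0 + W tauP t0 t0 + W tauP u0 u0 = -3.
Proof.
rewrite SP1 ?inU1 // SP2 ?inU1 // SP3 ?inU2 // SP4 ?inU2 // SP5 ?inU2 //.
rewrite /rho1 /rho2 /rho3 /zc /=; ring.
Qed.

Lemma quadP (hb : forall i, (i < p3)%N -> (b 0 <= b i)%N)
  (hc : forall j, (1 <= j < p2)%N -> (c 1 <= c j)%N)
  (Hcase : (p2 == 1%N) || (b 0 <= 2 * c 1)%N) i : i \in tauP ->
  rho3 i * rho1 i + (- rho2 i) * rho2 i + (rho1 i + (b 0 + 1)%:R * rho3 i) * rho3 i <= 0.
Proof.
case: i => [[k hk] j]; rewrite inE /idx /rho1 /rho2 /rho3 /tg /zc /= => hj.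
case: k hk j hj => [|[|[|[|[|k]]]]] hk j //= hj; rewrite /idx /=.
- lra.
- lra.
- have jlt : (j < p2)%N := ltn_ord j.
  have hcj : (b 0 <= 2 * c j)%N.
    case/orP: Hcase => [/eqP e | h].
      by move: jlt hj; move: (nat_of_ord j) => jj; rewrite e; case: jj.
    have := hc j; rewrite lt0n hj jlt => /(_ isT) h2; lia.
  move: hcj; rewrite -(ler_nat rat) natrM (negbTE hj) natrD => H; lra.
- have := hb j (ltn_ord j); rewrite -(ler_nat rat) !natrD => H; have := ler0n rat (b j); lra.
- lra.
Qed.
Lemma pent_contra (hb : forall i, (i < p3)%N -> (b 0 <= b i)%N)
  (hc : forall j, (1 <= j < p2)%N -> (c 1 <= c j)%N)
  (Hcase : (p2 == 1%N) || (b 0 <= 2 * c 1)%N)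
  (Hnef : ch2_nef d cones deg) : False.
Proof.
have hcard : #|tauP| = (d - 2)%N by rewrite -card_tauP addnK.
have := Hnef tauP CP hcard; rewrite ch2W.
rewrite (bigD1 v0) //= (bigD1 y0) //= (bigD1 z0) //= (bigD1 t0) //= (bigD1 u0) //=.
set rest := \sum_(i | _) _.
have Hrest : rest <= 0.
  apply: sumr_le0 => i /andP[/andP[/andP[/andP[h1 h2] h3] h4] h5].
  have iP : i \in tauP.
    rewrite inE; apply/negP => /eqP /omitP [E|[E|[E|[E|E]]]].
    - by rewrite E eqxx in h1.
    - by rewrite E eqxx in h2.
    - by rewrite E eqxx in h3.
    - by rewrite E eqxx in h4.
    - by rewrite E eqxx in h5.
  by rewrite SP6 // quadP.
have := sumO_P; lra.
Qed.

Section TF.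
Hypothesis h2' : (1 < p2)%N.
Definition w1 : R := @mk K2 1 h2'.
Definition omitT (r : R) : bool := ((idx r == 0%N) && (tg r != 3%N)) || ((tg r == 2%N) && (idx r == 1%N)).
Definition tauT : {set R} := [set r | ~~ omitT r].

Lemma zw_neq : (z0 == w1) = false.
Proof. by apply/eqP => /(congr1 (@idx _ _ _ _ _)). Qed.
Lemma wz_neq : (w1 == z0) = false.
Proof. by apply/eqP => /(congr1 (@idx _ _ _ _ _)). Qed.

Lemma omitTP (r : R) : omitT r -> r = v0 \/ r = y0 \/ r = z0 \/ r = u0 \/ r = w1.
Proof.
case/orP => [/andP[/eqP h h3] | /andP[/eqP h2 /eqP h1]]; last first.
  by right; right; right; right; apply: mk_eq.
move: h3; have := tg_lt5 r; case E: (tg r) => [|[|[|[|[|k]]]]] // _ _.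
- by left; apply: mk_eq.
- by right; left; apply: mk_eq.
- by right; right; left; apply: mk_eq.
- by right; right; right; left; apply: mk_eq.
Qed.

Lemma card_tauT : (#|tauT| + 2 = d)%N.
Proof.
have -> : tauT = ~: (v0 |: (y0 |: (z0 |: (u0 |: [set w1])))).
  apply/setP => r; rewrite !inE.
  case Hr: (omitT r).
    by case/omitTP: Hr => [->|[->|[->|[->|->]]]]; rewrite ?eqxx ?orbT.
  apply/esym/negP => /orP[/eqP Er|/orP[/eqP Er|/orP[/eqP Er|/orP[/eqP Er|/eqP Er]]]];
  by move: Hr; rewrite Er.
have := cardsC (v0 |: (y0 |: (z0 |: (u0 |: [set w1])))); rewrite cardR.
have -> : #|v0 |: (y0 |: (z0 |: (u0 |: [set w1])))| = 5%N.
  by rewrite !cardsU1 cards1 !inE zw_neq.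
rewrite /dimN => <-; lia.
Qed.

Lemma Tnon (a b' : R) (k1 k2 : 'I_5) :
  G k1 :|: G k2 \in the_primitive_collections p0 p1 p2 p3 p4 ->
  (forall r, omitT r -> (tg r == k1) || (tg r == k2) -> (r == a) || (r == b')) ->
  tauT :|: [set a; b'] \notin cones.
Proof.
move=> HP H; apply: (noncone2 HP) => r Hr; rewrite !inE.
case Ho: (omitT r); last by [].
by rewrite (H r Ho Hr) orbT.
Qed.

Ltac tnon k1 k2 := apply: (@Tnon _ _ k1 k2); [by rewrite !inE eqxx ?orbT |
  by move=> r /omitTP [->|[->|[->|[->|->]]]]; rewrite ?eqxx ?orbT //;
     rewrite /tg /= ?o0E ?o1E ?o2E ?o3E ?o4E].

Lemma WTvy : W tauT v0 y0 = 0.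
Proof. by apply: W_SR; [exact: card_tauT | tnon (0 : 'I_5) (1 : 'I_5)]. Qed.
Lemma WTzw : W tauT z0 w1 = 0.
Proof. by apply: W_SR; [exact: card_tauT | tnon (2 : 'I_5) (3 : 'I_5)]. Qed.
Lemma WTux x : W tauT u0 x = 0.
Proof.
apply: W_SR; first exact: card_tauT.
apply: (@noncone2 _ (3 : 'I_5) (4 : 'I_5)); first by rewrite !inE eqxx ?orbT.
move=> r; rewrite o3E o4E !inE => Hr.
case Ho: (omitT r); last by [].
case/omitTP: Ho Hr => [->|[->|[->|[->|->]]]] //; by rewrite eqxx ?orbT.
Qed.
Lemma WTxu x : W tauT x u0 = 0.
Proof. by rewrite W_sym WTux. Qed.

Ltac cwT x1 x2 x3 x4 x5 := apply: (@cone_wit _ x1 x2 x3 x4 x5); by rewrite ?inE ?zw_neq ?wz_neq.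

Lemma CTvz : tauT :|: [set v0; z0] \in cones. Proof. cwT y0 w1 w1 u0 u0. Qed.
Lemma CTvw : tauT :|: [set v0; w1] \in cones. Proof. cwT y0 z0 z0 u0 u0. Qed.
Lemma CTyz : tauT :|: [set y0; z0] \in cones. Proof. cwT v0 w1 w1 u0 u0. Qed.
Lemma CTyw : tauT :|: [set y0; w1] \in cones. Proof. cwT v0 z0 z0 u0 u0. Qed.
Lemma CT : tauT \in cones. Proof. cwT v0 z0 z0 u0 u0. Qed.

Lemma WTvw : W tauT v0 w1 = 1.
Proof. by apply: W_one; rewrite ?inE //; [exact: card_tauT | exact: CTvw]. Qed.
Lemma WTyw : W tauT y0 w1 = 1.
Proof. by apply: W_one; rewrite ?inE //; [exact: card_tauT | exact: CTyw]. Qed.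
Lemma WTyz : W tauT y0 z0 = 1.
Proof. by apply: W_one; rewrite ?inE //; [exact: card_tauT | exact: CTyz]. Qed.

Lemma WTyv : W tauT y0 v0 = W tauT v0 y0. Proof. exact: W_sym. Qed.
Lemma WTwz : W tauT w1 z0 = W tauT z0 w1. Proof. exact: W_sym. Qed.
Lemma WTwv : W tauT w1 v0 = W tauT v0 w1. Proof. exact: W_sym. Qed.
Lemma WTwy : W tauT w1 y0 = W tauT y0 w1. Proof. exact: W_sym. Qed.
Lemma WTzy : W tauT z0 y0 = W tauT y0 z0. Proof. exact: W_sym. Qed.
Definition WTall := (WTvy, WTzw, WTvw, WTyw, WTyz, WTyv, WTwz, WTwv, WTwy, WTzy, WTux, WTxu).

Ltac outsT := let r := fresh "r" in move=> r; rewrite !inE negb_or => /andP[] /negPn/omitTP;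
  case=> [->|[->|[->|[->|->]]]]; rewrite ?eqxx ?orbT // => _;
  rewrite ?WTall /rho1 /rho2 /rho3 /zc /=.

Lemma ST1 r : r \in tauT :|: [set v0; z0] -> W tauT v0 r = rho3 r.
Proof.
move=> rS; rewrite (@solve _ (W tauT v0) 0 0 1 CTvz (W_lin v0 card_tauT) _ r rS); first by ring.
outsT; ring.
Qed.

Lemma ST2 r : r \in tauT :|: [set y0; z0] -> W tauT y0 r = rho3 r.
Proof.
move=> rS; rewrite (@solve _ (W tauT y0) 0 0 1 CTyz (W_lin y0 card_tauT) _ r rS); first by ring.
outsT; ring.
Qed.

Lemma ST3 r : r \in tauT :|: [set v0; z0] -> W tauT z0 r = rho1 r + (c 1)%:R * rho3 r.
Proof.
move=> rS; rewrite (@solve _ (W tauT z0) 1 0 (c 1)%:R CTvz (W_lin z0 card_tauT) _ r rS);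
  first by ring.
outsT; ring.
Qed.

Lemma ST4 r : r \in tauT :|: [set v0; w1] -> W tauT w1 r = rho1 r.
Proof.
move=> rS; rewrite (@solve _ (W tauT w1) 1 0 0 CTvw (W_lin w1 card_tauT) _ r rS); first by ring.
outsT; ring.
Qed.

Lemma ST6 i : i \in tauT ->
  W tauT i i = rho3 i * rho1 i + 0 * rho2 i + (rho1 i + (c 1)%:R * rho3 i) * rho3 i.
Proof.
move=> iP.
rewrite (@solve _ (W tauT i) (rho3 i) 0 (rho1 i + (c 1)%:R * rho3 i) CTvz
   (W_lin i card_tauT) _ i (inU _ _ iP)) //.
move=> r; rewrite !inE negb_or => /andP[] /negPn/omitTP;
  case=> [->|[->|[->|[->|->]]]]; rewrite ?eqxx ?orbT // => _.
- rewrite W_sym ST2 ?inU //; rewrite /rho1 /rho2 /rho3 /=; ring.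
- rewrite WTxu /rho1 /rho2 /rho3 /=; ring.
- rewrite W_sym ST4 ?inU //; rewrite /rho1 /rho2 /rho3 /zc /=; ring.
Qed.

Lemma sumO_T : W tauT v0 v0 + W tauT y0 y0 + W tauT z0 z0 + W tauT u0 u0 + W tauT w1 w1 = 0.
Proof.
rewrite ST1 ?inU1 // ST2 ?inU1 // ST3 ?inU2 // ST4 ?inU2 // WTux.
rewrite /rho1 /rho2 /rho3 /zc /=; ring.
Qed.

Lemma quadT (hb : forall i, (i < p3)%N -> (b 0 <= b i)%N)
  (hc : forall j, (1 <= j < p2)%N -> (c 1 <= c j)%N)
  (Hcase : (2 * c 1 < b 0)%N) i : i \in tauT ->
  rho3 i * rho1 i + 0 * rho2 i + (rho1 i + (c 1)%:R * rho3 i) * rho3 i <= 0.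
Proof.
case: i => [[k hk] j]; rewrite inE /omitT /idx /rho1 /rho2 /rho3 /tg /zc /=.
case: k hk j => [|[|[|[|[|k]]]]] hk j //= hj; rewrite /idx /=.
- lra.
- lra.
- rewrite andbT /= in hj.
  have j0 : (nat_of_ord j != 0%N) by apply: contra hj => ->.
  have j1 : (nat_of_ord j != 1%N) by apply: contra hj => ->; rewrite orbT.
  have := hc j; rewrite lt0n j0 ltn_ord => /(_ isT).
  rewrite -(ler_nat rat) (negbTE j0) => H; have := ler0n rat (c 1); lra.
- have := hb j (ltn_ord j); rewrite -(ler_nat rat) !natrD => H.
  move: Hcase; rewrite -(ltr_nat rat) natrM => H2; have := ler0n rat (c 1); lra.
- lra.
Qed.

Lemma t0T (Hcase : (2 * c 1 < b 0)%N) :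
  rho3 t0 * rho1 t0 + 0 * rho2 t0 + (rho1 t0 + (c 1)%:R * rho3 t0) * rho3 t0 < 0.
Proof.
rewrite /rho1 /rho2 /rho3 /=; move: Hcase; rewrite -(ltr_nat rat) natrM natrD => H.
have := ler0n rat (c 1); lra.
Qed.

Lemma tfull_contra (hb : forall i, (i < p3)%N -> (b 0 <= b i)%N)
  (hc : forall j, (1 <= j < p2)%N -> (c 1 <= c j)%N)
  (Hcase : (2 * c 1 < b 0)%N)
  (Hnef : ch2_nef d cones deg) : False.
Proof.
have hcard : #|tauT| = (d - 2)%N by rewrite -card_tauT addnK.
have := Hnef tauT CT hcard; rewrite ch2W.
rewrite (bigD1 v0) //= (bigD1 y0) //= (bigD1 z0) //= (bigD1 u0) //= (bigD1 w1) ?wz_neq //=.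
rewrite (bigD1 t0) //=.
set rest := \sum_(i | _) _.
have Hrest : rest <= 0.
  apply: sumr_le0 => i /andP[/andP[/andP[/andP[/andP[h1 h2] h3] h4] h5] h6].
  have iP : i \in tauT.
    rewrite inE; apply/negP => /omitTP [E|[E|[E|[E|E]]]].
    - by rewrite E eqxx in h1.
    - by rewrite E eqxx in h2.
    - by rewrite E eqxx in h3.
    - by rewrite E eqxx in h4.
    - by rewrite E eqxx in h5.
  by rewrite ST6 // quadT.
have t0P : t0 \in tauT by rewrite inE.
have := t0T Hcase; rewrite -ST6 // => Ht.
have := sumO_T; lra.
Qed.

End TF.
End S.

Unset Implicit Arguments.
Set Strict Implicit.

Theorem lemma3p4 (p0 p1 p2 p3 p4 : nat)
  (hp0 : (0 < p0)%N) (hp1 : (0 < p1)%N) (hp2 : (0 < p2)%N) (hp3 : (0 < p3)%N) (hp4 : (0 < p4)%N)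
  (b c : nat -> nat)
  (hbmin : forall i, (i < p3)%N -> (b 0 <= b i)%N)
  (hcmin : forall j, (1 <= j < p2)%N -> (c 1 <= c j)%N)
  (vec : ray p0 p1 p2 p3 p4 -> 'rV[int]_(dimN p0 p1 p2 p3 p4))
  (cones : {set {set ray p0 p1 p2 p3 p4}})
  (Hfan : smooth_projective_complete_fan vec cones)
  (Hprim : forall P, primitive_collection cones P <-> P \in the_primitive_collections p0 p1 p2 p3 p4)
  (Hrel : primitive_relations b c vec)
  (deg : {ffun ray p0 p1 p2 p3 p4 -> nat} -> rat)
  (Hdeg : intersection_form vec cones deg)
  (Hnef : ch2_nef (dimN p0 p1 p2 p3 p4) cones deg) :
  p3 = 1%N.
Proof.
exfalso.
case: (boolP ((p2 == 1%N) || (b 0 <= 2 * c 1)%N)) => Hcase.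
  by apply: (@pent_contra p0 p1 p2 p3 p4 hp0 hp1 hp2 hp3 hp4 b c vec cones Hfan Hprim Hrel deg Hdeg).
move: Hcase; rewrite negb_or -ltnNge => /andP[H1 H2].
have h2' : (1 < p2)%N by rewrite ltn_neqAle eq_sym H1 hp2.
by apply: (@tfull_contra p0 p1 p2 p3 p4 hp0 hp1 hp2 hp3 hp4 b c vec cones Hfan Hprim Hrel deg Hdeg h2').
Qed.
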